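(* Let $k\ge d$ and let $(\mathbf a_1,\mathbf b_1),\dots,(\mathbf a_k,\mathbf b_k)$ be i.i.d. copies of a pair of random vectors $(\mathbf a,\mathbf b)$ in $\mathbb R^d\times\mathbb R^d$ such that $\mathbb E[\mathbf a\mathbf b^\top]$ exists (all entries $\mathbb E[a_ib_j]$ finite). Let $\mathbf A,\mathbf B\in\mathbb R^{k\times d}$ have $i$-th rows $\mathbf a_i^\top$ and $\mathbf b_i^\top$. Then $\mathbb E[\det(\mathbf A^\top\mathbf B)]=d!\binom{k}{d}\det(\mathbb E[\mathbf a\mathbf b^\top])$. *)

(* Defs.v *)
From HB Require Import structures.
From mathcomp Require Import all_boot all_order all_algebra.
From mathcomp Require Import all_classical all_reals all_analysis.
Set Implicit Arguments. Unset Strict Implicit. Unset Printing Implicit Defensive.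
Import Order.TTheory GRing.Theory Num.Theory.
Local Open Scope classical_set_scope.
Local Open Scope ring_scope.

Section defs.
Context {dT : measure_display} {T : measurableType dT} {R : realType}.

Definition pair_events {n : nat} (a b : T -> 'rV[R]_n) : set (set T) :=
  [set E | exists (j : 'I_n) (B : set R), measurable B /\
     (E = (fun x => a x 0 j) @^-1` B \/ E = (fun x => b x 0 j) @^-1` B)].

Definition pair_sigma {n : nat} (a b : T -> 'rV[R]_n) : set (set T) :=
  <<s pair_events a b >>.

(* Mutual independence of the random pairs (a i, b i), i < k:
   the generated sigma-algebras satisfy the product rule
   (taking E i = setT for unused indices covers every subfamily). *)
Definition mutually_independent_pairs (P : probability T R) {k n : nat}
  (a b : 'I_k -> T -> 'rV[R]_n) : Prop :=
  forall E : 'I_k -> set T, (forall i, pair_sigma (a i) (b i) (E i)) ->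
    P (\bigcap_i E i) = (\prod_(i < k) P (E i))%E.

End defs.

Definition joint_rect {dT : measure_display} {T : measurableType dT}
  {R : realType} (P : probability T R) {n : nat} (a b : T -> 'rV[R]_n)
  (B C : 'I_n -> set R) : \bar R :=
  P [set x | (forall j, B j (a x 0 j)) /\ (forall j, C j (b x 0 j))].

(* (a, b) on (T,P) and (a', b') on (T',P') have the same joint distribution
   on R^n x R^n: they agree on all measurable rectangles, a pi-system
   generating the Borel sigma-algebra of R^(2n). *)
Definition same_joint_law {dT dT' : measure_display} {T : measurableType dT}
  {T' : measurableType dT'} {R : realType} (P : probability T R)
  (P' : probability T' R) {n : nat} (a b : T -> 'rV[R]_n)
  (a' b' : T' -> 'rV[R]_n) : Prop :=
  forall B C : 'I_n -> set R, (forall j, measurable (B j)) ->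
    (forall j, measurable (C j)) ->
    joint_rect P a b B C = joint_rect P' a' b' B C.

Definition stack_rows {T : Type} {R : Type} {k n : nat}
  (a : 'I_k -> T -> 'rV[R]_n) (x : T) : 'M[R]_(k, n) :=
  \matrix_(i < k, j < n) a i x 0 j.

(* Main.v *)
Require Import Defs.
From HB Require Import structures.
From mathcomp Require Import all_boot all_order all_algebra.
From mathcomp Require Import all_classical all_reals all_analysis.
From mathcomp Require Import measurable_realfun.
From mathcomp Require Import lra.
From mathcomp Require Import perm fingroup.
Import Order.TTheory GRing.Theory Num.Theory.
Import numFieldNormedType.Exports.
Local Open Scope classical_set_scope.
Local Open Scope ring_scope.
Section combo.
Context {d : measure_display} {T : measurableType d} {R : realType}.
Variable mu : probability T R.

Lemma int_combo (I : finType) (c : I -> R) (E : I -> set T) :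
  (forall i, measurable (E i)) ->
  mu.-integrable setT (fun x => (\sum_i c i * \1_(E i) x)%:E) /\
  (\int[mu]_x (\sum_i c i * \1_(E i) x)%:E = (\sum_i c i * fine (mu (E i)))%:E)%E.
Proof.
move=> mE.
have hi : forall i, mu.-integrable setT (fun x => ((c i)%:E * (\1_(E i) x)%:E)%E).
  by move=> i; apply: integrableZl => //; exact: integrable_indic.
under eq_fun do rewrite -sumEFin.
split; first by apply: integrable_sum => // i _; under eq_fun do rewrite EFinM; exact: hi.
under eq_integral do under eq_bigr do rewrite EFinM.
rewrite integral_sum // -sumEFin; apply: eq_bigr => i _.
rewrite integralZl //; last exact: integrable_indic.
rewrite integral_indic // setIT EFinM fineK //; exact: fin_num_measure.
Qed.
End combo.

Section sigma_facts.
Context {T : pointedType}.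
Lemma sig_setI (G : set (set T)) A B : <<s G>> A -> <<s G>> B -> <<s G>> (A `&` B).
Proof. move=> hA hB; exact: (@measurableI _ (g_sigma_algebraType G) A B hA hB). Qed.
Lemma sig_setT (G : set (set T)) : <<s G>> setT.
Proof. exact: (@measurableT _ (g_sigma_algebraType G)). Qed.
Lemma sig_bigcap (G : set (set T)) (I : finType) (F : I -> set T) :
  (forall i, <<s G>> (F i)) -> <<s G>> (\bigcap_i F i).
Proof.
move=> h; have := @fin_bigcap_measurable _ (g_sigma_algebraType G) I setT F.
by apply => // i _; exact: h.
Qed.
End sigma_facts.

Lemma indic_bigcapT {T : Type} {R : realType} (I : finType) (F : I -> set T) x :
  \1_(\bigcap_i F i) x = \prod_i (\1_(F i) x : R).
Proof.
case: (pselect ((\bigcap_i F i) x)) => h.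
  rewrite indicE mem_set // big1 // => i _; rewrite indicE mem_set //; exact: h.
rewrite indicE memNset //.
have [i Fi] : exists i, ~ F i x.
  apply: contra_notP h => /forallNP hx i _; exact: contra_notP (hx i).
by rewrite (bigD1 i) //= indicE memNset // mul0r.
Qed.

Section indep.
Context {dT : measure_display} {T : measurableType dT} {R : realType}.
Variable P : probability T R.
Variables (k n : nat) (ak bk : 'I_k -> T -> 'rV[R]_n).

Lemma indep_combo (M : finType) (c : 'I_k -> M -> R) (E : 'I_k -> M -> set T) :
  mutually_independent_pairs P ak bk ->
  (forall i m, pair_sigma (ak i) (bk i) (E i m)) -> (forall i m, measurable (E i m)) ->
  P.-integrable setT (fun x => (\prod_i \sum_m c i m * \1_(E i m) x)%:E) /\
  (\int[P]_x (\prod_i \sum_m c i m * \1_(E i m) x)%:E =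
    (\prod_i \sum_m c i m * fine (P (E i m)))%:E)%E.
Proof.
move=> ind sE mE.
have eq1 : (fun x => (\prod_i \sum_m c i m * \1_(E i m) x)%:E) =
  (fun x => (\sum_(F : {ffun 'I_k -> M}) (\prod_i c i (F i)) *
      \1_(\bigcap_i E i (F i)) x)%:E).
  apply/funext => x; congr (_%:E); rewrite bigA_distr_bigA /=; apply: eq_bigr => F _.
  by rewrite big_split /= indic_bigcapT.
rewrite eq1.
have mI : forall F : {ffun 'I_k -> M}, measurable (\bigcap_i E i (F i)).
  move=> F; apply: fin_bigcap_measurable => //; exact: finite_finset.
have [h1 h2] := @int_combo _ _ _ P {ffun 'I_k -> M} (fun F => \prod_i c i (F i)) _ mI.
split => //; rewrite h2; congr (_%:E).
rewrite bigA_distr_bigA /=; apply: eq_bigr => F _.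
rewrite ind; last by move=> i; exact: sE.
have fin i : P (E i (F i)) \is a fin_num by exact: fin_num_measure.
rewrite -(eq_bigr _ (fun i _ => fineK (fin i))) prodEFin /=.
by rewrite big_split.
Qed.
End indep.
Section approxR.
Variable R : realType.
Definition fp (u : R) : \bar R := (Num.max u 0)%:E.
Definition fn (u : R) : \bar R := (Num.max (- u) 0)%:E.
Definition ap n (u : R) : R := approx setT fp n u.
Definition an n (u : R) : R := approx setT fn n u.
Definition rn n u := ap n u - an n u.
Definition ra n u := ap n u + an n u.

Lemma mfp : measurable_fun setT fp.
Proof. apply/measurable_EFinP; apply: measurable_maxr => //; exact: measurable_cst. Qed.
Lemma mfn : measurable_fun setT fn.
Proof. apply/measurable_EFinP; exact: measurable_maxr. Qed.
Lemma fp0 u : (0 <= fp u)%E. Proof. by rewrite lee_fin le_max lexx orbT. Qed.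
Lemma fn0 u : (0 <= fn u)%E. Proof. by rewrite lee_fin le_max lexx orbT. Qed.
Definition NN n := (n * 2 ^ n)%N.
Definition cA n (m : 'I_(NN n).+1) : R := if (m < NN n)%N then m%:R * 2 ^- n else n%:R.
Definition SA (f : R -> \bar R) n (m : 'I_(NN n).+1) : set R :=
  if (m < NN n)%N then dyadic_approx setT f n m else integer_approx setT f n.

Lemma approx_combo f n u : approx setT f n u = \sum_(m < (NN n).+1) cA n m * \1_(SA f n m) u.
Proof.
rewrite big_ord_recr /= /cA /SA /= ltnn /approx; congr (_ + _).
by apply: eq_bigr => i _; rewrite /= ltn_ord.
Qed.

Lemma mSA f n m : measurable_fun setT f -> measurable (SA f n m).
Proof.
move=> mf; rewrite /SA; case: ifP => _.
  rewrite /dyadic_approx; case: ifPn => [kn|_]//; rewrite -preimage_comp.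
  by apply: mf => //; apply/measurable_image_EFin; exact: measurable_itv.
exact: emeasurable_fun_c_infty.
Qed.
Definition Mn n := ('I_2 * 'I_(NN n).+1)%type.
Definition SN n (m : Mn n) : set R := SA (if m.1 == ord0 then fp else fn) n m.2.
Definition cNs n (m : Mn n) : R := (if m.1 == ord0 then 1 else -1) * cA n m.2.
Definition cPs n (m : Mn n) : R := cA n m.2.

Lemma mSN n m : measurable (SN n m).
Proof. rewrite /SN; case: ifP => _; apply: mSA; [exact: mfp | exact: mfn]. Qed.

Lemma rn_combo n u : rn n u = \sum_(m : Mn n) cNs n m * \1_(SN n m) u.
Proof.
rewrite -(pair_bigA _ (fun (s : 'I_2) (m : 'I_(NN n).+1) => cNs n (s, m) * \1_(SN n (s, m)) u)) /=.
rewrite big_ord_recl big_ord1 /rn /ap /an !approx_combo /cNs /SN /=.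
rewrite -sumrN; congr (_ + _); apply: eq_bigr => i _ //=; first by rewrite mul1r.
by rewrite mulN1r mulNr.
Qed.

Lemma ra_combo n u : ra n u = \sum_(m : Mn n) cPs n m * \1_(SN n m) u.
Proof.
rewrite -(pair_bigA _ (fun (s : 'I_2) (m : 'I_(NN n).+1) => cPs n (s, m) * \1_(SN n (s, m)) u)) /=.
by rewrite big_ord_recl big_ord1 /ra /ap /an !approx_combo /cPs /SN /=.
Qed.

Lemma cA_ge0 n m : 0 <= cA n m.
Proof. by rewrite /cA; case: ifP => _ //; rewrite mulr_ge0 // invr_ge0 exprn_ge0. Qed.

Lemma ap_ge0 n u : 0 <= ap n u.
Proof. rewrite /ap approx_combo; apply: sumr_ge0 => m _; rewrite mulr_ge0 //; exact: cA_ge0. Qed.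
Lemma an_ge0 n u : 0 <= an n u.
Proof. rewrite /an approx_combo; apply: sumr_ge0 => m _; rewrite mulr_ge0 //; exact: cA_ge0. Qed.

Lemma ap_le n u : ap n u <= Num.max u 0.
Proof. by rewrite -lee_fin; apply: (le_approx n (fun x _ => fp0 x)). Qed.
Lemma an_le n u : an n u <= Num.max (- u) 0.
Proof. by rewrite -lee_fin; apply: (le_approx n (fun x _ => fn0 x)). Qed.

Lemma ap_nd u m n : (m <= n)%N -> ap m u <= ap n u.
Proof. by move=> mn; have /lefP := nd_approx setT fp mn; apply. Qed.
Lemma an_nd u m n : (m <= n)%N -> an m u <= an n u.
Proof. by move=> mn; have /lefP := nd_approx setT fn mn; apply. Qed.

Lemma ap_cvg u : ap n u @[n --> \oo] --> Num.max u 0.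
Proof. exact: (cvg_approx (fun x _ => fp0 x) (I : setT u) (ltry _)). Qed.
Lemma an_cvg u : an n u @[n --> \oo] --> Num.max (- u) 0.
Proof. exact: (cvg_approx (fun x _ => fn0 x) (I : setT u) (ltry _)). Qed.
Lemma maxpn (u : R) : Num.max u 0 - Num.max (- u) 0 = u.
Proof.
rewrite !maxEle; case: ifP => h1; case: ifP => h2; lra.
Qed.
Lemma maxpn' (u : R) : Num.max u 0 + Num.max (- u) 0 = `|u|.
Proof.
rewrite !maxEle; case: (lerP 0 u) => h.
  rewrite (ger0_norm h); case: ifP => h1; case: ifP => h2; lra.
rewrite (ltr0_norm h); case: ifP => h1; case: ifP => h2; lra.
Qed.

Lemma rn_cvg u : rn n u @[n --> \oo] --> u.
Proof. rewrite -{2}(maxpn u); apply: cvgB; [exact: ap_cvg | exact: an_cvg]. Qed.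
Lemma ra_cvg u : ra n u @[n --> \oo] --> `|u|.
Proof. rewrite -(maxpn' u); apply: cvgD; [exact: ap_cvg | exact: an_cvg]. Qed.
Lemma ra_ge0 n u : 0 <= ra n u.
Proof. by rewrite addr_ge0 // ?ap_ge0 ?an_ge0. Qed.
Lemma ra_le n u : ra n u <= `|u|.
Proof. by rewrite -maxpn' lerD // ?ap_le ?an_le. Qed.
Lemma ra_nd u m n : (m <= n)%N -> ra m u <= ra n u.
Proof. by move=> mn; rewrite lerD // ?ap_nd ?an_nd. Qed.
Lemma rn_le n u : `|rn n u| <= ra n u.
Proof.
apply: (le_trans (ler_normB _ _)).
by rewrite !ger0_norm ?ap_ge0 ?an_ge0.
Qed.

Lemma measurable_combo (M : finType) (c : M -> R) (S : M -> set R) :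
  (forall m, measurable (S m)) -> measurable_fun setT (fun u => \sum_m c m * \1_(S m) u).
Proof.
move=> mS; apply: measurable_sum => m; apply: measurable_funM; first exact: measurable_cst.
exact: measurable_indic.
Qed.
Lemma mrn n : measurable_fun setT (rn n).
Proof.
rewrite (_ : rn n = fun u => \sum_m cNs n m * \1_(SN n m) u); last by apply/funext => u; exact: rn_combo.
apply: measurable_combo; exact: mSN.
Qed.
Lemma mra n : measurable_fun setT (ra n).
Proof.
rewrite (_ : ra n = fun u => \sum_m cPs n m * \1_(SN n m) u); last by apply/funext => u; exact: ra_combo.
apply: measurable_combo; exact: mSN.
Qed.
End approxR.

Lemma cvgEFin' {R : realType} (u : nat -> R) (l : R) :
  u n @[n --> \oo] --> l -> (u n)%:E @[n --> \oo] --> l%:E.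
Proof. by move=> h; apply: cvg_EFin => //; exact: nearW. Qed.

Lemma cvg_seqprod {R : realType} (I : Type) (s : seq I) (u : I -> nat -> R) (l : I -> R) :
  (forall i, u i n @[n --> \oo] --> l i) ->
  (\prod_(i <- s) u i n) @[n --> \oo] --> \prod_(i <- s) l i.
Proof.
move=> h; elim: s => [|i s ih].
  under eq_fun do rewrite big_nil; rewrite big_nil; exact: cvg_cst.
under eq_fun do rewrite big_cons; rewrite big_cons; exact: cvgM.
Qed.

Section limits.
Context {d : measure_display} {T : measurableType d} {R : realType}.
Variable mu : probability T R.

Lemma mct_real (g : nat -> T -> R) (h : T -> R) :
  (forall n, measurable_fun setT (g n)) -> (forall n x, 0 <= g n x) ->
  (forall x m n, (m <= n)%N -> g m x <= g n x) ->
  (forall x, g n x @[n --> \oo] --> h x) ->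
  (\int[mu]_x (g n x)%:E)%E @[n --> \oo] --> (\int[mu]_x (h x)%:E)%E.
Proof.
move=> mg g0 nd cv.
have := @cvg_monotone_convergence _ _ _ mu setT measurableT (fun n x => (g n x)%:E).
have -> : (fun x => limn ((fun n => (g n x)%:E) : nat -> \bar R)) = (fun x => (h x)%:E).
  by apply/funext => x; apply: cvg_lim => //; exact: cvgEFin'.
apply.
- by move=> n; apply/measurable_EFinP; exact: mg.
- by move=> n x _; rewrite lee_fin.
- by move=> x _ m n mn; rewrite lee_fin; exact: nd.
Qed.

Lemma dct_real (g : nat -> T -> R) (h H : T -> R) :
  (forall n, measurable_fun setT (g n)) -> measurable_fun setT h ->
  (forall n x, `|g n x| <= H x) -> mu.-integrable setT (EFin \o H) ->
  (forall x, g n x @[n --> \oo] --> h x) ->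
  mu.-integrable setT (EFin \o h) /\
  (\int[mu]_x (g n x)%:E)%E @[n --> \oo] --> (\int[mu]_x (h x)%:E)%E.
Proof.
move=> mg mh bd iH cv.
have bd' : forall x n, setT x -> (`|(g n x)%:E| <= (EFin \o H) x)%E.
  by move=> x n _ /=; rewrite lee_fin.
have [i1 _ i3] := @dominated_convergence _ _ _ mu setT measurableT
  (fun n x => (g n x)%:E) (EFin \o h) (EFin \o H)
  (fun n => proj2 (measurable_EFinP _ _) (mg n)) (proj2 (measurable_EFinP _ _) mh)
  (aeW _ (fun x _ => cvgEFin' _ _ (cv x))) iH (aeW _ bd').
by split.
Qed.
End limits.

Section pairs.
Variable R : realType.

Definition PS {T : Type} n (al be : T -> R) (mm : Mn n * Mn n) : set T :=
  [set y | SN R n mm.1 (al y) /\ SN R n mm.2 (be y)].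

Lemma indic_pair {T : Type} (A B : set R) (al be : T -> R) x :
  \1_A (al x) * \1_B (be x) = \1_([set y | A (al y) /\ B (be y)]) x :> R.
Proof.
rewrite !indicE; case: (pselect (A (al x))) => hA; case: (pselect (B (be x))) => hB.
- by rewrite !mem_set // mulr1.
- by rewrite (memNset hB) mulr0 memNset // => -[].
- by rewrite (memNset hA) mul0r memNset // => -[].
- by rewrite (memNset hA) mul0r memNset // => -[].
Qed.

Lemma pair_combo_eq {T : Type} n (cf : Mn n -> R) (al be : T -> R) x :
  (\sum_m cf m * \1_(SN R n m) (al x)) * (\sum_m cf m * \1_(SN R n m) (be x)) =
  \sum_(mm : Mn n * Mn n) (cf mm.1 * cf mm.2) * \1_(PS n al be mm) x.
Proof.
rewrite big_distrlr /= pair_bigA /=; apply: eq_bigr => mm _.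
by rewrite mulrACA indic_pair.
Qed.

Context {d : measure_display} {T : measurableType d}.
Lemma mPS n (al be : T -> R) mm : measurable_fun setT al -> measurable_fun setT be ->
  measurable (PS n al be mm).
Proof.
move=> ma mb; rewrite (_ : PS n al be mm = (al @^-1` SN R n mm.1) `&` (be @^-1` SN R n mm.2)) //.
apply: measurableI.
  by rewrite -[X in measurable X]setTI; apply: ma => //; exact: mSN.
by rewrite -[X in measurable X]setTI; apply: mb => //; exact: mSN.
Qed.
End pairs.

Lemma lim_ra {R : realType} {d} {T : measurableType d} (mu : probability T R) (al be : T -> R) :
  measurable_fun setT al -> measurable_fun setT be ->
  (\int[mu]_x (ra R n (al x) * ra R n (be x))%:E)%E @[n --> \oo] -->
  (\int[mu]_x (`|al x * be x|)%:E)%E.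
Proof.
move=> ma mb; apply: mct_real.
- move=> n; apply: measurable_funM; exact: measurableT_comp (mra R n) _.
- by move=> n x; rewrite mulr_ge0 // ra_ge0.
- by move=> x m n mn; rewrite ler_pM // ?ra_ge0 // ra_nd.
- by move=> x; rewrite normrM; apply: cvgM; exact: ra_cvg.
Qed.

Lemma lim_rn {R : realType} {d} {T : measurableType d} (mu : probability T R) (al be : T -> R) :
  measurable_fun setT al -> measurable_fun setT be ->
  mu.-integrable setT (fun x => (al x * be x)%:E) ->
  (\int[mu]_x (rn R n (al x) * rn R n (be x))%:E)%E @[n --> \oo] -->
  (\int[mu]_x (al x * be x)%:E)%E.
Proof.
move=> ma mb iab.
have iH : mu.-integrable setT (EFin \o (fun x => `|al x * be x|)).
  rewrite (_ : EFin \o _ = abse \o (fun x => (al x * be x)%:E)); first exact: integrable_abse.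
  by apply/funext => x /=.
apply: (proj2 (@dct_real _ _ _ mu (fun n x => rn R n (al x) * rn R n (be x)) (fun x => al x * be x) (fun x => `|al x * be x|) _ _ _ iH _)).
- move=> n; apply: measurable_funM; exact: measurableT_comp (mrn R n) _.
- exact: measurable_funM.
- move=> n x; rewrite !normrM ler_pM //.
    exact: le_trans (rn_le _ _ _) (ra_le _ _ _).
  exact: le_trans (rn_le _ _ _) (ra_le _ _ _).
- by move=> x; apply: cvgM; exact: rn_cvg.
Qed.

Lemma cvg_eq_lim {R : realType} {u v : nat -> \bar R} {A B : \bar R} :
  (forall n, u n = v n) -> u n @[n --> \oo] --> A -> v n @[n --> \oo] --> B -> A = B.
Proof.
move=> e hu hv; have euv : u = v by apply/funext.
by rewrite -(cvg_lim _ hu) // -(cvg_lim _ hv) // euv.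
Qed.

Section single.
Context {R : realType} {d0 : measure_display} {T0 : measurableType d0}
  {d : measure_display} {T : measurableType d}.
Variables (mu : probability T R) (mu0 : probability T0 R) (al be : T -> R) (al0 be0 : T0 -> R).
Hypotheses (mal : measurable_fun setT al) (mbe : measurable_fun setT be).
Hypotheses (mal0 : measurable_fun setT al0) (mbe0 : measurable_fun setT be0).
Hypothesis hPS : forall n mm, mu (PS R n al be mm) = mu0 (PS R n al0 be0 mm).
Hypothesis int0 : mu0.-integrable setT (fun x => (al0 x * be0 x)%:E).

Lemma transfer n (cf : Mn n -> R) :
  (\int[mu]_x ((\sum_m cf m * \1_(SN R n m) (al x)) * (\sum_m cf m * \1_(SN R n m) (be x)))%:E =
  \int[mu0]_x ((\sum_m cf m * \1_(SN R n m) (al0 x)) * (\sum_m cf m * \1_(SN R n m) (be0 x)))%:E)%E.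
Proof.
under eq_integral do rewrite pair_combo_eq.
under [RHS]eq_integral do rewrite pair_combo_eq.
rewrite (int_combo mu _ _ _ (fun mm => mPS R n al be mm mal mbe)).2.
rewrite (int_combo mu0 _ _ _ (fun mm => mPS R n al0 be0 mm mal0 mbe0)).2.
by congr (_%:E); apply: eq_bigr => mm _; rewrite hPS.
Qed.

Lemma transfer_ra n :
  (\int[mu]_x (ra R n (al x) * ra R n (be x))%:E = \int[mu0]_x (ra R n (al0 x) * ra R n (be0 x))%:E)%E.
Proof.
under eq_integral do rewrite !ra_combo.
under [RHS]eq_integral do rewrite !ra_combo.
exact: transfer.
Qed.

Lemma transfer_rn n :
  (\int[mu]_x (rn R n (al x) * rn R n (be x))%:E = \int[mu0]_x (rn R n (al0 x) * rn R n (be0 x))%:E)%E.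
Proof.
under eq_integral do rewrite !rn_combo.
under [RHS]eq_integral do rewrite !rn_combo.
exact: transfer.
Qed.

Lemma single_abs :
  (\int[mu]_x (`|al x * be x|)%:E = \int[mu0]_x (`|al0 x * be0 x|)%:E)%E /\
  (\int[mu]_x (`|al x * be x|)%:E < +oo)%E.
Proof.
have h1 := lim_ra mu al be mal mbe.
have h2 := lim_ra mu0 al0 be0 mal0 mbe0.
have e : (\int[mu]_x (`|al x * be x|)%:E = \int[mu0]_x (`|al0 x * be0 x|)%:E)%E.
  by apply: (cvg_eq_lim _ h1 h2) => n; rewrite transfer_ra.
split => //; rewrite e.
move/integrableP : int0 => [_]; apply: le_lt_trans.
apply: ge0_le_integral => //. all: try (move=> x _; rewrite ?abse_EFin //).
- apply/measurable_EFinP; apply: measurableT_comp => //; exact: measurable_funM.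
- apply: measurableT_comp => //; apply/measurable_EFinP; exact: measurable_funM.
Qed.

Lemma single_int : mu.-integrable setT (fun x => (al x * be x)%:E).
Proof.
apply/integrableP; split; first by apply/measurable_EFinP; exact: measurable_funM.
have [_ h] := single_abs; apply: le_lt_trans h.
apply: ge0_le_integral => //. all: try (move=> x _; rewrite ?abse_EFin //).
- apply: measurableT_comp => //; apply/measurable_EFinP; exact: measurable_funM.
- apply/measurable_EFinP; apply: measurableT_comp => //; exact: measurable_funM.
Qed.

Lemma single_eq :
  (\int[mu]_x (al x * be x)%:E = \int[mu0]_x (al0 x * be0 x)%:E)%E.
Proof.
have h1 := lim_rn mu al be mal mbe single_int.
have h2 := lim_rn mu0 al0 be0 mal0 mbe0 int0.
by apply: (cvg_eq_lim _ h1 h2) => n; rewrite transfer_rn.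
Qed.
End single.

Lemma PS_rect {R : realType} {T : Type} n (f g : T -> 'rV[R]_n) (A B : set R) p q :
  [set x | (forall j, (if j == p then A else setT) (f x 0 j)) /\
           (forall j, (if j == q then B else setT) (g x 0 j))] =
  [set x | A (f x 0 p) /\ B (g x 0 q)].
Proof.
apply/seteqP; split => x /= [h1 h2].
  by split; [have := h1 p | have := h2 q]; rewrite eqxx.
by split => j; case: eqP => [->|_].
Qed.

Definition m0 N : Mn N * Mn N := ((ord0, ord0), (ord0, ord0)).

Section frame.
Context {R : realType} {dT0 : measure_display} {T0 : measurableType dT0}
  {dT : measure_display} {T : measurableType dT}.
Variables (n k : nat) (P0 : probability T0 R) (a b : T0 -> 'rV[R]_n)
  (P : probability T R) (ak bk : 'I_k -> T -> 'rV[R]_n).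
Hypothesis ma : forall j, measurable_fun setT (fun x => a x 0 j).
Hypothesis mb : forall j, measurable_fun setT (fun x => b x 0 j).
Hypothesis mak : forall i j, measurable_fun setT (fun x => ak i x 0 j).
Hypothesis mbk : forall i j, measurable_fun setT (fun x => bk i x 0 j).
Hypothesis ind : mutually_independent_pairs P ak bk.
Hypothesis law : forall i, same_joint_law P P0 (ak i) (bk i) a b.
Hypothesis iab : forall j l, P0.-integrable setT (fun x => (a x 0 j * b x 0 l)%:E).
Variable o : 'I_k -> option ('I_n * 'I_n).

Definition Zf x i := match o i with Some pq => ak i x 0 pq.1 * bk i x 0 pq.2 | None => 1 end.
Definition Zap (phi : R -> R) x i :=
  match o i with Some pq => phi (ak i x 0 pq.1) * phi (bk i x 0 pq.2) | None => 1 end.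

Lemma law_PS i p q N mm :
  P (PS R N (fun x => ak i x 0 p) (fun x => bk i x 0 q) mm) =
  P0 (PS R N (fun x => a x 0 p) (fun x => b x 0 q) mm).
Proof.
have := law i (fun j => if j == p then SN R N mm.1 else setT)
  (fun j => if j == q then SN R N mm.2 else setT).
rewrite /joint_rect !PS_rect; apply.
  by move=> j; case: ifP => _; [exact: mSN | exact: measurableT].
by move=> j; case: ifP => _; [exact: mSN | exact: measurableT].
Qed.

Definition cZ N (cf : Mn N -> R) i (mm : Mn N * Mn N) : R :=
  match o i with Some _ => cf mm.1 * cf mm.2 | None => (mm == m0 N)%:R end.
Definition EZ N i (mm : Mn N * Mn N) : set T :=
  match o i with Some pq => PS R N (fun x => ak i x 0 pq.1) (fun x => bk i x 0 pq.2) mm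
  | None => setT end.

Lemma combo_Zap N (cf : Mn N -> R) phi x i :
  (forall u, phi u = \sum_m cf m * \1_(SN R N m) u) ->
  Zap phi x i = \sum_mm cZ N cf i mm * \1_(EZ N i mm) x.
Proof.
move=> hphi; rewrite /Zap /cZ /EZ; case: (o i) => [pq|].
  by rewrite !hphi (pair_combo_eq _ _ cf (fun y => ak i y 0 pq.1) (fun y => bk i y 0 pq.2) x).
rewrite (bigD1 (m0 N)) //= big1 ?addr0.
  by rewrite indicE mem_set // mul1r.
by move=> mm /negbTE ->; rewrite mul0r.
Qed.

Lemma mEZ N i mm : measurable (EZ N i mm).
Proof. rewrite /EZ; case: (o i) => [pq|] //; exact: mPS. Qed.

Lemma sEZ N i mm : pair_sigma (ak i) (bk i) (EZ N i mm).
Proof.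
rewrite /EZ; case: (o i) => [[p q]|]; last exact: sig_setT.
rewrite /PS /=; apply: sig_setI; apply: sub_sigma_algebra.
  exists p, (SN R N mm.1); split; [exact: mSN | by left].
exists q, (SN R N mm.2); split; [exact: mSN | by right].
Qed.

Lemma prod_combo N (cf : Mn N -> R) phi :
  (forall u, phi u = \sum_m cf m * \1_(SN R N m) u) ->
  P.-integrable setT (fun x => (\prod_i Zap phi x i)%:E) /\
  (\int[P]_x (\prod_i Zap phi x i)%:E = (\prod_i fine (\int[P]_x (Zap phi x i)%:E))%:E)%E.
Proof.
move=> hphi.
have e : (fun x => (\prod_i Zap phi x i)%:E) =
    (fun x => (\prod_i \sum_mm cZ N cf i mm * \1_(EZ N i mm) x)%:E).
  by apply/funext => x; congr (_%:E); apply: eq_bigr => i _; exact: combo_Zap.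
rewrite e; have [h1 h2] := @indep_combo _ _ _ P k n ak bk _ (cZ N cf) (EZ N) ind (sEZ N) (mEZ N).
split => //; rewrite h2; congr (_%:E); apply: eq_bigr => i _.
have e2 : (fun x => (Zap phi x i)%:E) = (fun x => (\sum_mm cZ N cf i mm * \1_(EZ N i mm) x)%:E).
  by apply/funext => x; rewrite (combo_Zap N cf phi x i hphi).
by rewrite e2 (int_combo P _ _ _ (mEZ N i)).2.
Qed.

Lemma Zap_meas phi : measurable_fun setT phi -> forall i, measurable_fun setT (fun x => Zap phi x i).
Proof.
move=> mphi i; rewrite /Zap; case: (o i) => [pq|]; last exact: measurable_cst.
by apply: measurable_funM; apply: measurableT_comp.
Qed.

Lemma Zf_meas i : measurable_fun setT (fun x => Zf x i).
Proof.
rewrite /Zf; case: (o i) => [pq|]; last exact: measurable_cst.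
exact: measurable_funM.
Qed.

Lemma int_one : (\int[P]_x (1%:E) = 1)%E.
Proof.
rewrite (_ : (fun x => 1%:E) = cst 1%:E) // integral_cst // mul1e; exact: probability_setT.
Qed.

Lemma Zi_int i : P.-integrable setT (fun x => (Zf x i)%:E).
Proof.
rewrite /Zf; case: (o i) => [[p q]|]; last first.
  exact: (finite_measure_integrable_cst P 1 measurableT).
exact: (single_int P P0 _ _ _ _ (mak i p) (mbk i q) (ma p) (mb q) (law_PS i p q) (iab p q)).
Qed.

Lemma Zi_abs_lim i : (\int[P]_x (Zap (ra R N) x i)%:E)%E @[N --> \oo] --> (\int[P]_x (`|Zf x i|)%:E)%E.
Proof.
rewrite /Zap /Zf; case: (o i) => [[p q]|]; last first.
  rewrite normr1; exact: cvg_cst.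
exact: lim_ra.
Qed.

Lemma Zi_lim i : (\int[P]_x (Zap (rn R N) x i)%:E)%E @[N --> \oo] --> (\int[P]_x (Zf x i)%:E)%E.
Proof.
have := Zi_int i; rewrite /Zap /Zf; case: (o i) => [[p q]|] hi; last exact: cvg_cst.
exact: lim_rn.
Qed.

Lemma Zi_abs_fin i : (\int[P]_x (`|Zf x i|)%:E)%E \is a fin_num.
Proof.
have := integrable_abse (Zi_int i) => /(integrable_fin_num measurableT).
by congr (_ \is a fin_num); apply: eq_integral => x _ /=; rewrite abse_EFin.
Qed.

Lemma Zi_val i : fine (\int[P]_x (Zf x i)%:E)%E =
  match o i with Some pq => fine ('E_P0[(fun x => a x 0 pq.1 * b x 0 pq.2)%R])%E | None => 1 end.
Proof.
rewrite /Zf; case: (o i) => [[p q]|]; last by rewrite int_one.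
by rewrite unlock (single_eq P P0 _ _ _ _ (mak i p) (mbk i q) (ma p) (mb q) (law_PS i p q) (iab p q)).
Qed.

Lemma Zap_ra_ge0 N x i : 0 <= Zap (ra R N) x i.
Proof. by rewrite /Zap; case: (o i) => [pq|] //; rewrite mulr_ge0 // ra_ge0. Qed.

Lemma fine_lim (u : nat -> \bar R) (A : \bar R) :
  A \is a fin_num -> u N @[N --> \oo] --> A -> fine (u N) @[N --> \oo] --> fine A.
Proof. by move=> fA hu; apply: fine_cvg; rewrite fineK. Qed.

Lemma MPT : P.-integrable setT (fun x => (\prod_i Zf x i)%:E) /\
  (\int[P]_x (\prod_i Zf x i)%:E = (\prod_i fine (\int[P]_x (Zf x i)%:E))%:E)%E.
Proof.
pose rho i := fine (\int[P]_x (`|Zf x i|)%:E)%E.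
have rN N := (prod_combo N (cPs R N) (ra R N) (ra_combo R N)).2.
have lim_ri i : fine (\int[P]_x (Zap (ra R N) x i)%:E)%E @[N --> \oo] --> rho i.
  exact: fine_lim (Zi_abs_fin i) (Zi_abs_lim i).
have lim_prod := cvg_seqprod _ (index_enum 'I_k) _ _ lim_ri.
have mct := @mct_real _ _ _ P (fun N x => \prod_i Zap (ra R N) x i)
  (fun x => \prod_i `|Zf x i|).
have {mct} mct : (\int[P]_x (\prod_i Zap (ra R N) x i)%:E)%E @[N --> \oo] -->
    (\int[P]_x (\prod_i `|Zf x i|)%:E)%E.
  apply: mct.
  - by move=> N; apply: measurable_prod => i _; apply: Zap_meas; exact: mra.
  - by move=> N x; apply: prodr_ge0 => i _; exact: Zap_ra_ge0.
  - move=> x m N mN; apply: ler_prod => i _; rewrite Zap_ra_ge0 /=.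
    by rewrite /Zap; case: (o i) => [pq|] //; rewrite ler_pM ?ra_ge0 ?ra_nd.
  - move=> x; apply: cvg_seqprod => i; rewrite /Zap /Zf; case: (o i) => [pq|].
      by rewrite normrM; apply: cvgM; exact: ra_cvg.
    by rewrite normr1; exact: cvg_cst.
have eabs := cvg_eq_lim rN mct (cvgEFin' _ _ lim_prod).
have mprod : measurable_fun setT (fun x => \prod_i Zf x i).
  by apply: measurable_prod => i _; exact: Zf_meas.
have iH : P.-integrable setT (EFin \o (fun x => \prod_i `|Zf x i|)).
  apply/integrableP; split.
    apply/measurable_EFinP; apply: measurable_prod => i _.
    exact: measurableT_comp (Zf_meas i).
  rewrite (eq_integral (fun x => (\prod_i `|Zf x i|)%:E)); first by rewrite eabs ltry.
  move=> x _ /=; rewrite ger0_norm //; exact: prodr_ge0.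
have intZ : P.-integrable setT (fun x => (\prod_i Zf x i)%:E).
  apply: (le_integrable measurableT _ _ iH).
    by apply/measurable_EFinP.
  by move=> x _ /=; rewrite lee_fin -normr_prod normr_id.
split => //.
have mg : forall N, measurable_fun setT (fun x => \prod_i Zap (rn R N) x i).
  by move=> N; apply: measurable_prod => i _; apply: Zap_meas; exact: mrn.
have bd : forall N x, `|\prod_i Zap (rn R N) x i| <= \prod_i `|Zf x i|.
  move=> N x; rewrite normr_prod; apply: ler_prod => i _; rewrite normr_ge0 /=.
  rewrite /Zap /Zf; case: (o i) => [pq|]; last by rewrite normr1.
  rewrite !normrM ler_pM //; exact: le_trans (rn_le _ _ _) (ra_le _ _ _).
have cv : forall x, \prod_i Zap (rn R N) x i @[N --> \oo] --> \prod_i Zf x i.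
  move=> x; apply: cvg_seqprod => i; rewrite /Zap /Zf; case: (o i) => [pq|].
    by apply: cvgM; exact: rn_cvg.
  exact: cvg_cst.
have [_ dct] := @dct_real _ _ _ P (fun N x => \prod_i Zap (rn R N) x i)
  (fun x => \prod_i Zf x i) (fun x => \prod_i `|Zf x i|) mg mprod bd iH cv.
have sN N := (prod_combo N (cNs R N) (rn R N) (rn_combo R N)).2.
have lim_si i : fine (\int[P]_x (Zap (rn R N) x i)%:E)%E @[N --> \oo] -->
    fine (\int[P]_x (Zf x i)%:E)%E.
  exact: fine_lim (integrable_fin_num measurableT (Zi_int i)) (Zi_lim i).
exact: cvg_eq_lim sN dct (cvgEFin' _ _ (cvg_seqprod _ (index_enum 'I_k) _ _ lim_si)).
Qed.
End frame.

Lemma det_expand {R : comRingType} (d k : nat) (A B : 'M[R]_(k, d)) :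
  \det (A^T *m B) = \sum_(f : {ffun 'I_d -> 'I_k} | injectiveb f)
     \sum_(s : 'S_d) (-1) ^+ s * \prod_j (A (f j) j * B (f j) (s j)).
Proof.
have step : forall (f : {ffun 'I_d -> 'I_k}), \sum_(s : 'S_d) (-1) ^+ s * \prod_j (A (f j) j * B (f j) (s j)) =
    (\prod_j A (f j) j) * \det (\matrix_(j, l) B (f j) l).
  move=> f; rewrite /determinant mulr_sumr; apply: eq_bigr => s _.
  by rewrite big_split /= mulrCA; congr (_ * (_ * _)); apply: eq_bigr => j _; rewrite mxE.
rewrite [RHS](eq_bigr _ (fun f _ => step f)).
have all_f : \det (A^T *m B) = \sum_(f : {ffun 'I_d -> 'I_k})
    (\prod_j A (f j) j) * \det (\matrix_(j, l) B (f j) l).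
  rewrite -(eq_bigr _ (fun f _ => step f)) exchange_big /= /determinant.
  apply: eq_bigr => s _; rewrite -mulr_sumr; congr (_ * _).
  rewrite (eq_bigr (fun j => \sum_i A i j * B i (s j))); last first.
    by move=> j _; rewrite !mxE; apply: eq_bigr => i _; rewrite mxE.
  by rewrite bigA_distr_bigA.
rewrite all_f (bigID (fun f : {ffun 'I_d -> 'I_k} => injectiveb f)) /=.
rewrite [X in _ + X]big1 ?addr0 // => f /injectivePn [j1 [j2 ne12 e12]].
rewrite (determinant_alternate ne12) ?mulr0 // => l; by rewrite !mxE e12.
Qed.

Lemma reindex_pick {R : comRingType} (d k : nat) (f : 'I_d -> 'I_k) (F : 'I_k -> 'I_d -> R) :
  injective f ->
  \prod_j F (f j) j = \prod_i (if [pick j | f j == i] is Some j then F i j else 1).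
Proof.
move=> inj.
rewrite (bigID (fun i => i \in f @: [set: 'I_d]%SET)) /= [X in _ * X]big1 ?mulr1; last first.
  move=> i hi; case: pickP => // j /eqP fj; move: hi; by rewrite -fj imset_f ?inE.
rewrite big_imset /=; last by move=> x y _ _; exact: inj.
apply: congr_big => // [j|j _]; first by rewrite inE.
case: pickP => [j' /eqP /inj -> //|/(_ j)]; by rewrite eqxx.
Qed.

Theorem lemma1 (R : realType) (d k : nat)
  (dT0 : measure_display) (T0 : measurableType dT0) (P0 : probability T0 R)
  (a b : T0 -> 'rV[R]_d)
  (dT : measure_display) (T : measurableType dT) (P : probability T R)
  (ak bk : 'I_k -> T -> 'rV[R]_d) :
  (d <= k)%N ->
  (forall j, measurable_fun setT (fun x => a x 0 j)) ->
  (forall j, measurable_fun setT (fun x => b x 0 j)) ->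
  (forall i j, measurable_fun setT (fun x => ak i x 0 j)) ->
  (forall i j, measurable_fun setT (fun x => bk i x 0 j)) ->
  mutually_independent_pairs P ak bk ->
  (forall i, same_joint_law P P0 (ak i) (bk i) a b) ->
  (forall j l, P0.-integrable setT (fun x => (a x 0 j * b x 0 l)%:E)) ->
  P.-integrable setT
    (fun x => (\det ((stack_rows ak x)^T *m stack_rows bk x))%:E) /\
  ('E_P[(fun x => \det ((stack_rows ak x)^T *m stack_rows bk x))%R])%E =
    ((d`! * 'C(k, d))%:R *
      \det (\matrix_(j < d, l < d) fine ('E_P0[(fun x => a x 0 j * b x 0 l)%R])%E))%:E.
Proof.
move=> hdk ma mb mak mbk ind law iab.
pose o (f : {ffun 'I_d -> 'I_k}) (s : 'S_d) (i : 'I_k) : option ('I_d * 'I_d) :=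
  if [pick j | f j == i] is Some j then Some (j, s j) else None.
have mpt f s := MPT d k P0 a b P ak bk ma mb mak mbk ind law iab (o f s).
have pw : forall x, \det ((stack_rows ak x)^T *m stack_rows bk x) =
   \sum_(f : {ffun 'I_d -> 'I_k} | injectiveb f) \sum_(s : 'S_d)
      (-1) ^+ s * \prod_i Zf d k ak bk (o f s) x i.
  move=> x; rewrite det_expand; apply: eq_bigr => f /injectiveP inj.
  apply: eq_bigr => s _; congr (_ * _).
  rewrite (eq_bigr (fun j => ak (f j) x 0 j * bk (f j) x 0 (s j))); last first.
    by move=> j _; rewrite /stack_rows !mxE.
  rewrite (reindex_pick d k f (fun i j => ak i x 0 j * bk i x 0 (s j)) inj).
  apply: eq_bigr => i _; rewrite /Zf /o; by case: pickP.
have efun : (fun x => (\det ((stack_rows ak x)^T *m stack_rows bk x))%:E) =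
    (fun x => \sum_(f : {ffun 'I_d -> 'I_k} | injectiveb f) \sum_(s : 'S_d)
       (((-1) ^+ s)%:E * (\prod_i Zf d k ak bk (o f s) x i)%:E))%E.
  apply/funext => x; rewrite pw -sumEFin; apply: eq_bigr => f _.
  by rewrite -sumEFin; apply: eq_bigr => s _; rewrite EFinM.
have hint (f : {ffun 'I_d -> 'I_k}) (s : 'S_d) : P.-integrable setT
    (fun x => (((-1) ^+ s)%:E * (\prod_i Zf d k ak bk (o f s) x i)%:E)%E).
  exact: integrableZl (mpt f s).1.
have hint2 (f : {ffun 'I_d -> 'I_k}) : P.-integrable setT (fun x => \sum_(s : 'S_d)
    (((-1) ^+ s)%:E * (\prod_i Zf d k ak bk (o f s) x i)%:E))%E.
  by apply: integrable_sum => // s _; exact: hint.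
split.
  by rewrite efun; apply: integrable_sum => // f _; exact: hint2.
rewrite unlock /= efun integral_sum //.
set Mx := \matrix_(j, l) _.
rewrite (eq_bigr (fun f => (\det Mx)%:E)); last first.
  move=> f /injectiveP inj.
  rewrite integral_sum //.
  rewrite /determinant -sumEFin; apply: eq_bigr => s _.
  rewrite integralZl //; last exact: (mpt f s).1.
  rewrite (mpt f s).2 -EFinM; congr (_%:E); congr (_ * _).
  rewrite (reindex_pick d k f (fun i j => Mx j (s j)) inj).
  apply: eq_bigr => i _.
  rewrite (Zi_val d k P0 a b P ak bk ma mb mak mbk law iab (o f s) i) /o.
  by case: pickP => [j _|_] //=; rewrite /Mx mxE unlock.
rewrite sumEFin sumr_const; congr (_%:E); rewrite [RHS]mulrC mulr_natr; congr (_ *+ _).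
have := card_inj_ffuns 'I_d 'I_k; rewrite !card_ord -bin_ffact mulnC => <-.
by apply: eq_card => f; rewrite inE.
Qed.
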